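(* Fix $I\ge 2$, $\rho\in(0,1)$, $\varepsilon\in(0,1)$. For every $p\in\mathbb{R}$, the event $C^p_{\mathcal T}(G)\subseteq\Omega$ (the set of states in which $G$ is common $p$-believed) is the same for every information tree $\mathcal T=(F,s)$ on the agent set $\{1,\dots,I\}$ (every forest $F$ and every seeding $s$). Moreover the probability $\mathbb P_{\mathcal T}[C^p_{\mathcal T}(G)]$ is the same for every information tree $\mathcal T$.
   Context: Model. Fix an integer $I\ge2$, agents $\mathcal I=\{1,\dots,I\}$, a prior $\rho\in(0,1)$ and a loss probability $\varepsilon\in(0,1)$. A state of nature $\theta\in\{g,b\}$ has $\Pr(\theta=g)=\rho$. A forest $F$ on $\mathcal I$ is a collection of vertex-disjoint undirected trees $T^1,\dots,T^R$ (connected acyclic graphs) whose vertex sets partition $\mathcal I$; a seeding $s=(s^1,\dots,s^R)$ chooses exactly one vertex $s^r$ of each $T^r$. The pair $\mathcal T=(F,s)$ is an information tree: orient each $T^r$ away from $s^r$ and add a root $0$ (the planner) with an arc $0\to s^r$ for each $r$; this is a directed tree rooted at $0$ in which every agent has a unique direct predecessor. If $\theta=b$ no messages are sent. If $\theta=g$ the planner sends a message along each arc $0\to s^r$, and every agent who receives a message forwards it along every arc leaving her (to all her neighbours except the one she received it from). Each transmission along an arc is lost independently with probability $\varepsilon$; so given $\theta=g$, agent $i$ receives the message iff no arc on the directed path from $0$ to $i$ fails. Agent $i$ observes only $x_i\in\{y,n\}$ (received / not received). The state space is $\Omega=\{g,b\}\times\{y,n\}^I$ and $\mathbb P_{\mathcal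 T}$ is the induced probability on $\Omega$. Events: $G=\{\theta=g\}$, $Y_i=\{x_i=y\}$, $N_i=\Omega\setminus Y_i$, $Y^*=\bigcap_{i}Y_i$. Belief operators: $B^p_i(E)=\{\omega:\mathbb P_{\mathcal T}[E\mid x_i=x_i(\omega)]\ge p\}$, $B^p(E)=\bigcap_{i\in\mathcal I}B^p_i(E)$, $B^{p,0}(E)=E$, $B^{p,\ell}(E)=B^p(B^{p,\ell-1}(E))$, and $C^p_{\mathcal T}(E)=\bigcap_{\ell\ge1}B^{p,\ell}(E)$. *)

(* Defs.v *)
From HB Require Import structures.
From mathcomp Require Import all_boot all_order all_algebra.
From mathcomp Require Import boolp.
Set Implicit Arguments. Unset Strict Implicit. Unset Printing Implicit Defensive.
Import Order.TTheory GRing.Theory Num.Theory.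

(* Agents are 'I_n (standing for 1..I with I = n). *)

(** Information tree T = (F, s): F a forest on the agents (symmetric,
    irreflexive, acyclic edge relation), s a seeding: a set of vertices
    containing exactly one vertex of each tree (connected component) of F. *)
Record infotree (n : nat) := InfoTree {
  fedge : rel 'I_n;
  fedge_sym : forall x y, fedge x y = fedge y x;
  fedge_irr : forall x, ~~ fedge x x;
  fedge_acyclic : forall c : seq 'I_n, uniq c -> (2 < size c)%N -> ~~ cycle fedge c;
  seeds : {set 'I_n};
  seeding : forall i : 'I_n, #|[set k in seeds | connect fedge k i]| = 1%N
}.

(** j lies on the (unique) path of F from the seed of i's tree to i, i.e. the
    arc into j lies on the directed path from the root 0 to i (the arc into
    the seed s^r being 0 -> s^r). *)
Definition onpath n (T : infotree n) (j i : 'I_n) : Prop :=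
  exists k, exists p : seq 'I_n,
    [/\ k \in seeds T, path (fedge T) k p, last k p = i,
        uniq (k :: p) & j \in k :: p].

(** State space Omega = {g,b} x {y,n}^I : true = g / true = y. *)
Definition Omega n := (bool * {ffun 'I_n -> bool})%type.

Section Prob.
Variables (R : realFieldType) (rho eps : R) (n : nat) (T : infotree n).
Local Open Scope ring_scope.

(** Point mass of P_T: given g, arcs (indexed by their head agent) survive
    independently w.p. 1 - eps (a j = true means the arc into j survives);
    agent i receives iff all arcs on the path from 0 to i survive. *)
Definition pmass (w : Omega n) : R :=
  if w.1 then
    rho * \sum_(a : {ffun 'I_n -> bool} |
                 [forall i, w.2 i == [forall j, `[< onpath T j i >] ==> a j]])
            \prod_(j : 'I_n) (if a j then 1 - eps else eps)
  else (1 - rho) * (w.2 == [ffun => false])%:R.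

Definition prob (E : {set Omega n}) : R := \sum_(w in E) pmass w.

Definition cprob (E : {set Omega n}) (i : 'I_n) (v : bool) : R :=
  prob (E :&: [set w : Omega n | w.2 i == v]) / prob [set w : Omega n | w.2 i == v].

Definition Gev : {set Omega n} := [set w : Omega n | w.1].

Definition Bi (p : R) (i : 'I_n) (E : {set Omega n}) : {set Omega n} :=
  [set w : Omega n | p <= cprob E i (w.2 i)].

Definition B (p : R) (E : {set Omega n}) : {set Omega n} :=
  \bigcap_(i : 'I_n) Bi p i E.

Definition Bl (p : R) (l : nat) (E : {set Omega n}) : {set Omega n} :=
  iter l (B p) E.

Definition Cp (p : R) (E : {set Omega n}) : {set Omega n} :=
  [set w : Omega n | `[< forall l : nat, (0 < l)%N -> w \in Bl p l E >]].

End Prob.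

(* Main.v *)
Require Import Defs.
From HB Require Import structures.
From mathcomp Require Import all_boot all_order all_algebra.
From mathcomp Require Import boolp.
From mathcomp Require Import lra.
Set Implicit Arguments. Unset Strict Implicit.
Import Order.TTheory GRing.Theory Num.Theory.

Lemma upath (T : eqType) (e : rel T) (esym : forall x y, e x y = e y x)
  (acyc : forall c : seq T, uniq c -> 2 < size c -> ~~ cycle e c) k p q :
  path e k p -> path e k q -> uniq (k::p) -> uniq (k::q) -> last k p = last k q -> p = q.
Proof.
elim: p k q => [|x p IH] k [|y q] //=.
- move=> _ _ _ /andP[kq _] H; exfalso; move: kq.
  by rewrite H mem_last.
- move=> _ _ /andP[kq _] _ H; exfalso; move: kq.
  by rewrite -H mem_last.
move=> /andP[kx px] /andP[ky qy] /andP[kxp ux] /andP[kyq uy] hl.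
case: (x =P y) => [exy|nxy].
  by subst y; rewrite (IH x q).
exfalso.
set s1 := x :: p; set s2 := y :: q.
have hs : has (mem s2) s1.
  apply/hasP; exists (last x p); first exact: mem_last.
  by rewrite /= hl mem_last.
set i := find (mem s2) s1.
have ilt : i < size s1 by rewrite -has_find.
set z := nth x s1 i.
have zs2 : z \in s2 := nth_find x hs.
set p1 := take i s1.
set jz := index z s2.
have jlt : jz < size s2 by rewrite index_mem.
set q1 := take jz s2.
have e1 : s1 = p1 ++ z :: drop i.+1 s1 by rewrite /p1 /z -drop_nth // cat_take_drop.
have e2 : s2 = q1 ++ z :: drop jz.+1 s2.
  have hz : nth x s2 jz = z by exact: nth_index.
  by rewrite /q1 -[z in z :: _]hz -drop_nth // cat_take_drop.
have pk1 : path e k s1 by rewrite /= kx.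
have pk2 : path e k s2 by rewrite /= ky.
have uk1 : uniq (k :: s1) by rewrite /= kxp.
have uk2 : uniq (k :: s2) by rewrite /= kyq.
move: pk1 uk1; rewrite e1 cat_path /= => /and3P[pp1 ez pr1].
rewrite mem_cat in_cons !negb_or cat_uniq /= => /andP[/and3P[kp1 kz _]].
move=> /and3P[up1 /norP[zp1 _] _].
move: pk2 uk2; rewrite e2 cat_path /= => /and3P[pq1 ez2 _].
rewrite mem_cat in_cons !negb_or cat_uniq /= => /andP[/and3P[kq1 _ _]].
move=> /and3P[uq1 /norP[zq1 _] _].
have disj : forall u, u \in p1 -> u \notin q1.
  move=> u up; apply/negP => uq.
  have us2 : u \in s2 by rewrite /q1 in uq; exact: mem_take uq.
  move: up; rewrite /p1 => /(nthP x) [m]; rewrite size_take ilt => mlt hm.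
  have := before_find x mlt.
  rewrite -/s1 -/i.
  have -> : nth x s1 m = u by rewrite -hm nth_take.
  by rewrite /= us2.
apply: (negP (acyc (k :: p1 ++ z :: rev q1) _ _)).
- rewrite /= mem_cat in_cons mem_rev !negb_or kp1 kz kq1 /=.
  rewrite cat_uniq /= mem_rev zq1 rev_uniq uq1 up1 /=.
  rewrite (negPf zp1) andbT /=; apply/hasP => -[u]; rewrite mem_rev => uq up.
  by have := disj u up; rewrite uq.
- rewrite /= size_cat /= size_rev.
  case: (posnP i) => [i0|ipos].
  + have zx : z = x by rewrite /z i0.
    have : jz != 0.
      by rewrite /jz zx /s2 /= eq_sym; case: (y =P x) => // yx; case: nxy.
    rewrite /q1 size_take jlt => jz0.
    by rewrite !(addnS, ltnS) addn_gt0 (lt0n jz) jz0 orbT.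
  + by rewrite /p1 size_take ilt !(addnS, ltnS) addn_gt0 ipos.
- rewrite /cycle rcons_cat rcons_cons cat_path pp1 /= ez /=.
  have hp : path e k (rcons q1 z) by rewrite -cats1 cat_path pq1 /= ez2.
  have := hp; rewrite -rev_path last_rcons belast_rcons rev_cons.
  by rewrite (@eq_path _ _ e) // => a b; rewrite esym.
Qed.

Lemma seed_uniq n (T : infotree n) k k' i : k \in seeds T -> k' \in seeds T ->
  connect (fedge T) k i -> connect (fedge T) k' i -> k = k'.
Proof.
move=> ks k's ci c'i.
have /cards1P [x hx] := introT eqP (seeding T i).
have : k \in [set k in seeds T | connect (fedge T) k i] by rewrite inE ks ci.
have : k' \in [set k in seeds T | connect (fedge T) k i] by rewrite inE k's c'i.
by rewrite hx !inE => /eqP -> /eqP ->.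
Qed.

Lemma onpath_refl n (T : infotree n) i : onpath T i i.
Proof.
have /cards1P [k hk] := introT eqP (seeding T i).
have : k \in [set k in seeds T | connect (fedge T) k i] by rewrite hk set11.
rewrite inE => /andP[ks /connectP [p pp ->]].
case: (shortenP pp) => p' pp' up' _.
exists k, p'; split => //; exact: mem_last.
Qed.

Lemma onpath_prefix n (T : infotree n) u j : onpath T u j ->
  exists k p1 p2, [/\ k \in seeds T, path (fedge T) k (p1 ++ p2),
     last k (p1 ++ p2) = j, uniq (k :: p1 ++ p2) & last k p1 = u].
Proof.
move=> [k [P [ks pP lP uP uin]]].
case: (splitPl uin) pP lP uP => p1 p2 lp1 pP lP uP.
by exists k, p1, p2.
Qed.

Lemma upathT n (T : infotree n) k p q : path (fedge T) k p -> path (fedge T) k q ->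
  uniq (k::p) -> uniq (k::q) -> last k p = last k q -> p = q.
Proof. apply: upath; [exact: fedge_sym | exact: fedge_acyclic]. Qed.

Lemma onpath_trans n (T : infotree n) u j v :
  onpath T u j -> onpath T v u -> onpath T v j.
Proof.
move=> /onpath_prefix [k [p1 [p2 [ks pP lP uP lp1]]]] [k' [Q [k's pQ lQ uQ vin]]].
move: (pP) (uP); rewrite cat_path -cat_cons cat_uniq => /andP[pp1 _] /andP[up1 _].
have kk : k' = k.
  apply: (@seed_uniq _ T k' k u k's ks); apply/connectP.
  - by exists Q.
  - by exists p1.
subst k'.
have eQ : Q = p1 by apply: (upathT pQ pp1) => //; rewrite lQ lp1.
subst Q.
exists k, (p1 ++ p2); split => //.
by rewrite -cat_cons mem_cat vin.
Qed.

Lemma onpath_antisym n (T : infotree n) u j :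
  onpath T u j -> u != j -> ~ onpath T j u.
Proof.
move=> /onpath_prefix [k [p1 [p2 [ks pP lP uP lp1]]]] uj [k' [Q [k's pQ lQ uQ jin]]].
move: (pP) (uP); rewrite cat_path -cat_cons cat_uniq => /andP[pp1 _] /and3P[up1 dis _].
have kk : k' = k.
  apply: (@seed_uniq _ T k' k u k's ks); apply/connectP.
  - by exists Q.
  - by exists p1.
subst k'.
have eQ : Q = p1 by apply: (upathT pQ pp1) => //; rewrite lQ lp1.
subst Q.
move: lP; rewrite last_cat lp1.
case: p2 pP uP dis => [|x p2] _ _ dis.
  by move=> /= ju; rewrite ju eqxx in uj.
move=> lj.
have : j \in x :: p2.
  have := mem_last u (x :: p2); rewrite lj in_cons => /orP[/eqP ju|//].
  by rewrite ju eqxx in uj.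
move=> jp2; move/hasP: dis; apply; by exists j.
Qed.

Local Open Scope ring_scope.

Definition fa n (T : infotree n) (a : {ffun 'I_n -> bool}) : {ffun 'I_n -> bool} :=
  [ffun i => [forall j, `[< onpath T j i >] ==> a j]].
Definition W (R : realFieldType) (eps : R) n (a : {ffun 'I_n -> bool}) : R :=
  \prod_j (if a j then 1 - eps else eps).
Definition c0 n : Omega n := (false, [ffun => false]).

Lemma sum_pair (R : realFieldType) n (F : Omega n -> R) :
  \sum_(w : Omega n) F w = \sum_(b : bool) \sum_(x : {ffun 'I_n -> bool}) F (b, x).
Proof. by rewrite pair_bigA; apply: eq_bigr => -[]. Qed.

Lemma probE (R : realFieldType) (rho eps : R) n (T : infotree n) (E : {set Omega n}) :
  prob rho eps T E = rho * \sum_a W eps a * ((true, fa T a) \in E)%:R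
                     + (1 - rho) * ((c0 n) \in E)%:R.
Proof.
rewrite /prob big_mkcond sum_pair big_bool /=; congr (_ + _).
- transitivity (\sum_x rho * \sum_a ((x == fa T a) && ((true, x) \in E))%:R * W eps a).
    apply: eq_bigr => x _; rewrite /pmass /=.
    case: ((true, x) \in E); last by rewrite big1 ?mulr0 // => a _; rewrite andbF mul0r.
    congr (_ * _); rewrite big_mkcond; apply: eq_bigr => a _ /=.
    have -> : [forall i, x i == [forall j, `[< onpath T j i >] ==> a j]] = (x == fa T a).
      apply/forallP/eqP => [h|-> i]; last by rewrite ffunE.
      by apply/ffunP => i; rewrite ffunE; apply/eqP.
    rewrite andbT /W; case: (x == fa T a).
    - by rewrite mul1r.
    - by rewrite mul0r.
  rewrite -mulr_sumr; congr (_ * _); rewrite exchange_big; apply: eq_bigr => a _.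
  rewrite (bigD1 (fa T a)) // eqxx /= big1 ?addr0; first by rewrite mulrC.
  move=> x xa.
  by rewrite (negPf xa) mul0r.
- rewrite (bigD1 [ffun => false]) // big1 => [|x /negPf xn]; last first.
    by rewrite /pmass /=; case: (_ \in E); rewrite // xn mulr0.
  change ((if (false, [ffun=> false]) \in E then pmass rho eps T (false, [ffun=> false]) else 0) + 0 = (1 - rho) * (c0 n \in E)%:R :> R).
  rewrite addr0 /c0 /pmass /= eqxx.
  by case: (_ \in E); rewrite ?mulr1 ?mulr0.
Qed.

Lemma W_ge0 (R : realFieldType) (eps : R) n a : 0 <= eps <= 1 -> 0 <= W eps (n:=n) a.
Proof.
move=> /andP[e0 e1]; apply: prodr_ge0 => i _; case: (a i) => //; by rewrite subr_ge0.
Qed.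

Lemma sum_prod (R : realFieldType) n (F : 'I_n -> bool -> R) :
  \sum_(a : {ffun 'I_n -> bool}) \prod_i F i (a i) = \prod_i (F i true + F i false).
Proof. by rewrite -bigA_distr_bigA; apply: eq_bigr => i _; rewrite big_bool. Qed.

Lemma sumW_j (R : realFieldType) (eps : R) n (j : 'I_n) b :
  \sum_a W eps a * (a j == b)%:R = if b then 1 - eps else eps.
Proof.
transitivity (\sum_(a : {ffun 'I_n -> bool}) \prod_i
   ((if a i then 1 - eps else eps) * (if i == j then (a i == b)%:R else 1))).
  apply: eq_bigr => a _; rewrite big_split /= /W; congr (_ * _).
  by rewrite (bigD1 j) //= eqxx big1 ?mulr1 // => i /negPf ->.
rewrite (sum_prod (fun i c => (if c then 1 - eps else eps) * (if i == j then (c == b)%:R else 1))).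
rewrite (bigD1 j) //= eqxx big1 ?mulr1.
  by case: b; rewrite /= ?mulr1 ?mulr0 ?addr0 ?add0r.
by move=> i /negPf ->; rewrite !mulr1 subrK.
Qed.

Lemma sumW (R : realFieldType) (eps : R) n : \sum_(a : {ffun 'I_n -> bool}) W eps a = 1.
Proof.
rewrite /W (sum_prod (fun i c => if c then 1 - eps else eps)).
by rewrite big1 // => i _; rewrite subrK.
Qed.

Lemma W_allT (R : realFieldType) (eps : R) n : W eps ([ffun => true] : {ffun 'I_n -> bool}) = (1 - eps) ^+ n :> R.
Proof.
by rewrite /W; under eq_bigr do rewrite ffunE; rewrite prodr_const card_ord.
Qed.

Lemma sumW_le (R : realFieldType) (eps : R) n (P Q : pred {ffun 'I_n -> bool}) :
  0 <= eps <= 1 -> (forall a, P a -> Q a) ->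
  \sum_a W eps a * (P a)%:R <= \sum_a W eps a * (Q a)%:R.
Proof.
move=> he hPQ; apply: ler_sum => a _; apply: ler_wpM2l; first exact: W_ge0.
by case: (boolP (P a)) => [/hPQ ->|_] //=; case: (Q a).
Qed.

Lemma sumW_ge_term (R : realFieldType) (eps : R) n (P : pred {ffun 'I_n -> bool}) a0 :
  0 <= eps <= 1 -> P a0 -> W eps a0 <= \sum_a W eps a * (P a)%:R.
Proof.
move=> he pa; rewrite (bigD1 a0) //= pa mulr1 lerDl; apply: sumr_ge0 => a _.
by apply: mulr_ge0; [exact: W_ge0 | case: (P a)].
Qed.


Definition Yv n (i : 'I_n) (v : bool) : {set Omega n} := [set w : Omega n | w.2 i == v].
Definition allY n : {set Omega n} := [set w : Omega n | [forall i, w.2 i]].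

Lemma fa_le n (T : infotree n) a i : fa T a i -> a i.
Proof. by rewrite ffunE => /forallP /(_ i) /implyP; apply; apply/asboolP; exact: onpath_refl. Qed.

Lemma fa_allT n (T : infotree n) i : fa T [ffun => true] i.
Proof. by rewrite ffunE; apply/forallP => j; rewrite ffunE implybT. Qed.

Lemma fa_all n (T : infotree n) a : [forall i, fa T a i] = (a == [ffun => true]).
Proof.
apply/forallP/eqP => [h|->]; last exact: fa_allT.
by apply/ffunP => i; rewrite ffunE; apply: fa_le.
Qed.

Section P.
Variables (R : realFieldType) (rho eps : R) (n : nat) (T : infotree n).
Hypotheses (hr : 0 < rho < 1) (he : 0 < eps < 1).

Let he' : 0 <= eps <= 1.
Proof. by case/andP: he => /ltW -> /ltW ->. Qed.

Lemma probT : prob rho eps T setT = 1.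
Proof.
rewrite probE inE.
under eq_bigr do rewrite inE mulr1.
by rewrite sumW mulr1 mulr1 subrKC.
Qed.

Lemma prob0 : prob rho eps T set0 = 0.
Proof.
rewrite probE inE big1 ?mulr0 ?addr0 // => a _; by rewrite inE mulr0.
Qed.

Lemma prob_allY : (0 < n)%N -> prob rho eps T (allY n) = rho * (1 - eps) ^+ n.
Proof.
move=> n0; rewrite probE.
have -> : c0 n \in allY n = false.
  by rewrite inE; apply/negbTE/forallPn; exists (Ordinal n0); rewrite ffunE.
rewrite mulr0 addr0; congr (_ * _).
under eq_bigr do rewrite inE /= fa_all.
rewrite (bigD1 [ffun => true]) //= eqxx mulr1 big1 ?addr0 ?W_allT // => a /negPf ->.
by rewrite mulr0.
Qed.

Lemma prob_le (E F : {set Omega n}) : E \subset F -> prob rho eps T E <= prob rho eps T F.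
Proof.
move=> /subsetP sEF; rewrite !probE; apply: lerD.
  apply: ler_wpM2l; first by case/andP: hr => /ltW.
  apply: sumW_le => // a; exact: sEF.
apply: ler_wpM2l; first by case/andP: hr => _; rewrite subr_ge0 => /ltW.
by case: (boolP (c0 n \in E)) => [/sEF -> //|]; case: (_ \in F).
Qed.

Lemma probYt i : prob rho eps T (Yv i true) = rho * \sum_a W eps a * (fa T a i)%:R.
Proof.
rewrite probE !inE /= ffunE /= mulr0 addr0; congr (_ * _).
by apply: eq_bigr => a _; rewrite inE /= eqb_id.
Qed.

Lemma probYt_pos i : 0 < prob rho eps T (Yv i true).
Proof.
rewrite probYt; apply: mulr_gt0; first by case/andP: hr.
apply: (lt_le_trans _ (sumW_ge_term (P := fun a => fa T a i) he' (fa_allT T i))).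
by rewrite W_allT exprn_gt0 // subr_gt0; case/andP: he.
Qed.

Lemma probYt_le i : prob rho eps T (Yv i true) <= rho * (1 - eps).
Proof.
rewrite probYt; apply: ler_wpM2l; first by case/andP: hr => /ltW.
rewrite -(sumW_j eps i true); by apply: sumW_le => // a /fa_le ->.
Qed.

Lemma probYf i : prob rho eps T (Yv i false) = rho * \sum_a W eps a * (~~ fa T a i)%:R + (1 - rho).
Proof.
rewrite probE !inE /= ffunE /= mulr1; congr (_ * _ + _).
by apply: eq_bigr => a _; rewrite inE /= eqbF_neg.
Qed.

Lemma probGYf i : prob rho eps T (Gev n :&: Yv i false) = rho * \sum_a W eps a * (~~ fa T a i)%:R.
Proof.
rewrite probE !inE /= mulr0 addr0; congr (_ * _).
by apply: eq_bigr => a _; rewrite !inE /= eqbF_neg.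
Qed.

Lemma sum_nfa i : eps <= \sum_a W eps a * (~~ fa T a i)%:R.
Proof.
rewrite -{1}(sumW_j eps i false); apply: sumW_le => // a /eqP ai.
by apply/negP => /fa_le; rewrite ai.
Qed.


Definition a1 := rho * eps / (rho * eps + (1 - rho)).
Definition cc := (1 - eps) ^+ n.-1.

Let rho0 : 0 < rho. Proof. by case/andP: hr. Qed.
Let rho1 : 0 < 1 - rho. Proof. by case/andP: hr => _; rewrite subr_gt0. Qed.
Let eps0 : 0 < eps. Proof. by case/andP: he. Qed.
Let eps1 : 0 < 1 - eps. Proof. by case/andP: he => _; rewrite subr_gt0. Qed.

Lemma probYf_ge i : rho * eps + (1 - rho) <= prob rho eps T (Yv i false).
Proof. by rewrite probYf lerD2r ler_wpM2l ?sum_nfa // ltW. Qed.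

Lemma den_pos : 0 < rho * eps + (1 - rho).
Proof. by rewrite addr_gt0 ?mulr_gt0. Qed.

Lemma probY_pos i v : 0 < prob rho eps T (Yv i v).
Proof. case: v; first exact: probYt_pos. exact: lt_le_trans den_pos (probYf_ge i). Qed.

Lemma cprob_G_true i : cprob rho eps T (Gev n) i true = 1.
Proof.
rewrite /cprob.
have -> : prob rho eps T (Gev n :&: [set w : Omega n | w.2 i == true]) = prob rho eps T (Yv i true).
  rewrite !probE !inE /= ffunE /=; congr (_ * _ + _).
  by apply: eq_bigr => a _; rewrite !inE.
by rewrite divff // lt0r_neq0 // probYt_pos.
Qed.

Lemma cprob_T i v : cprob rho eps T setT i v = 1.
Proof. by rewrite /cprob -/(Yv i v) setTI divff // lt0r_neq0 // probY_pos. Qed.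

Lemma cprob_G_false i : a1 <= cprob rho eps T (Gev n) i false.
Proof.
rewrite /cprob -/(Yv i false) probGYf probYf /a1.
set g := \sum_a _.
have hg : eps <= g by exact: sum_nfa.
rewrite ler_pdivrMr ?den_pos // mulrAC ler_pdivlMr; last first.
  by apply: lt_le_trans den_pos _; rewrite lerD2r ler_wpM2l // ltW.
have h : 0 <= rho * (1 - rho) * (g - eps) by rewrite mulr_ge0 ?subr_ge0 // mulr_ge0 // ltW.
nra.
Qed.

Lemma cprob_allT (E : {set Omega n}) i : (0 < n)%N -> (true, [ffun => true]) \in E ->
  cc <= cprob rho eps T E i true.
Proof.
move=> n0 hE; rewrite /cprob -/(Yv i true) ler_pdivlMr ?probYt_pos //.
apply: (@le_trans _ _ (rho * (1 - eps) ^+ n)).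
  apply: (@le_trans _ _ (cc * (rho * (1 - eps)))).
    by apply: ler_wpM2l; [rewrite exprn_ge0 // ltW | exact: probYt_le].
  by rewrite /cc mulrCA -exprSr prednK.
rewrite probE; apply: (@le_trans _ _ (rho * \sum_a W eps a * ((true, fa T a) \in E :&: Yv i true)%:R)).
  apply: ler_wpM2l; first exact: ltW.
  rewrite -W_allT; apply: sumW_ge_term => //.
  have -> : fa T [ffun => true] = [ffun => true].
    by apply/ffunP => j; rewrite [RHS]ffunE; apply/idP; exact: fa_allT.
  by rewrite !inE hE /= ffunE.
by rewrite lerDl mulr_ge0 // ltW.
Qed.

Lemma cprob_step (E : {set Omega n}) j : c0 n \notin E ->
  (forall w, w \in E -> forall u, u != j -> onpath T u j -> w.2 u) ->
  cprob rho eps T E j false <= a1.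
Proof.
move=> cE hE; rewrite /cprob -/(Yv j false) ler_pdivrMr; last exact: probY_pos.
apply: (@le_trans _ _ (a1 * (rho * eps + (1 - rho)))); last first.
  apply: ler_wpM2l; last exact: probYf_ge.
  by rewrite /a1 divr_ge0 // ?ltW ?den_pos // mulr_gt0.
rewrite /a1 divfK ?lt0r_neq0 ?den_pos // probE inE (negPf cE) mulr0 addr0.
apply: ler_wpM2l; first exact: ltW.
rewrite -{2}(sumW_j eps j false); apply: sumW_le => // a; rewrite !inE /= => /andP[wE naj].
apply/eqP; apply/negP => aj; move: naj; rewrite eqbF_neg => /negP; apply; rewrite ffunE.
apply/forallP => v; apply/implyP => /asboolP ov.
case: (v =P j) => [-> //|/eqP vj].
by apply: (@fa_le _ T); exact: (hE _ wE v vj ov).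
Qed.

Lemma cprob_allY_false (E : {set Omega n}) j : E \subset allY n ->
  cprob rho eps T E j false = 0.
Proof.
move=> /subsetP sE; rewrite /cprob.
have -> : E :&: [set w : Omega n | w.2 j == false] = set0.
  apply/setP => w; rewrite !inE; case: (boolP (w \in E)) => // /sE; rewrite inE.
  by move=> /forallP /(_ j) ->.
by rewrite prob0 mul0r.
Qed.

Lemma cprob_allY_true (E : {set Omega n}) j : (0 < n)%N ->
  (forall v, onpath T v j -> v = j) -> E \subset allY n ->
  cprob rho eps T E j true <= cc.
Proof.
move=> n0 sj sE; rewrite /cprob -/(Yv j true) ler_pdivrMr ?probYt_pos //.
have -> : prob rho eps T (Yv j true) = rho * (1 - eps).
  rewrite probYt -(sumW_j eps j true); congr (_ * _); apply: eq_bigr => a _.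
  rewrite eqb_id; suff -> : fa T a j = a j by [].
  apply/idP/idP; first exact: fa_le.
  by move=> aj; rewrite ffunE; apply/forallP => v; apply/implyP => /asboolP /sj ->.
apply: (@le_trans _ _ (prob rho eps T (allY n))).
  by apply: prob_le; apply: subset_trans (subsetIl _ _) sE.
by rewrite prob_allY // /cc mulrCA -exprSr prednK.
Qed.

End P.


Definition dep n (T : infotree n) (j : 'I_n) : nat := #|[set v | `[< onpath T v j >]]|.

Lemma dep_ge1 n (T : infotree n) j : (0 < dep T j)%N.
Proof. apply/card_gt0P; exists j; rewrite inE; apply/asboolP; exact: onpath_refl. Qed.

Lemma dep_le n (T : infotree n) j : (dep T j <= n)%N.
Proof. by rewrite /dep; apply: leq_trans (max_card _) _; rewrite card_ord. Qed.

Lemma dep_lt n (T : infotree n) u j : onpath T u j -> u != j -> (dep T u < dep T j)%N.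
Proof.
move=> ouj uj; apply: proper_card; apply/properP; split.
  apply/subsetP => v; rewrite !inE => /asboolP ov; apply/asboolP; exact: onpath_trans ouj ov.
exists j.
  rewrite inE; apply/asboolP; exact: onpath_refl.
rewrite inE; apply/negP => /asboolP; exact: onpath_antisym ouj uj.
Qed.

Lemma seedlike n (T : infotree n) : (0 < n)%N ->
  exists j, forall v, onpath T v j -> v = j.
Proof.
move=> n0.
suff : forall m j, (dep T j <= m)%N -> exists j, forall v, onpath T v j -> v = j.
  by move/(_ n (Ordinal n0)); apply; exact: dep_le.
elim => [|m IH] j hj.
  by move: (dep_ge1 T j); rewrite lt0n -leqn0 hj.
case: (boolP [exists v, `[< onpath T v j >] && (v != j)]).
  move=> /existsP [v /andP [/asboolP ov vj]].
  apply: (IH v); rewrite -ltnS; exact: leq_trans (dep_lt ov vj) hj.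
move=> /existsPn h; exists j => v ov; apply/eqP.
have := h v; rewrite negb_and (asboolT ov) /= => /negPn /eqP ->//.
Qed.

Lemma dep_seed n (T : infotree n) j : (forall v, onpath T v j -> v = j) -> (dep T j <= 1)%N.
Proof.
move=> hj; rewrite /dep -(cards1 j); apply: subset_leq_card; apply/subsetP => v.
by rewrite !inE => /asboolP /hj ->.
Qed.

Lemma inB (R : realFieldType) (rho eps : R) n (T : infotree n) p E w :
  (w \in B rho eps T p E) = [forall i, p <= cprob rho eps T E i (w.2 i)].
Proof.
apply/bigcapP/forallP => [h i|h i _]; first by have := h i isT; rewrite inE.
by rewrite inE; exact: h.
Qed.

Lemma BlS (R : realFieldType) (rho eps : R) n (T : infotree n) p l E :
  Bl rho eps T p l.+1 E = B rho eps T p (Bl rho eps T p l E).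
Proof. by []. Qed.

Lemma Cp_char (R : realFieldType) (rho eps : R) n (T : infotree n) p :
  (0 < n)%N -> 0 < rho < 1 -> 0 < eps < 1 ->
  Cp rho eps T p (Gev n) =
  if p <= a1 rho eps then setT else if p <= cc eps n then allY n else set0.
Proof.
move=> n0 hr he.
set E := fun l => Bl rho eps T p l (Gev n).
have [j0 hj0] := seedlike T n0.
have Q : a1 rho eps < p -> forall l, c0 n \notin E l /\
    forall w, w \in E l -> forall j, (dep T j <= l)%N -> w.2 j.
  move=> hp; elim => [|l [IHc IHw]].
    split; first by rewrite inE.
    by move=> w _ j; rewrite leqNgt dep_ge1.
  have hw : forall w, w \in E l.+1 -> forall j, (dep T j <= l.+1)%N -> w.2 j.
    move=> w; rewrite /E BlS inB => /forallP hB j hj.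
    apply/negPn/negP => /negbTE wj.
    have := hB j; rewrite wj => hpc.
    have hst : cprob rho eps T (E l) j false <= a1 rho eps.
      apply: (cprob_step hr he IHc) => w' w'E u uj ouj.
      apply: IHw => //; rewrite -ltnS; exact: leq_trans (dep_lt ouj uj) hj.
    by have := le_trans hpc hst; rewrite leNgt hp.
  split => //; apply/negP => /hw /(_ j0 (leq_trans (dep_seed hj0) (ltn0Sn l))).
  by rewrite ffunE.
apply/setP => w; rewrite inE.
case: ifP => hpa.
  have hall : forall l, E l.+1 = setT.
    elim => [|l IH].
      apply/setP => w'; rewrite /E BlS inB !inE; apply/forallP => i.
      case: (w'.2 i); first by rewrite cprob_G_true // (le_trans hpa) // /a1 ler_pdivrMr ?mul1r ?lerDl ?subr_ge0 ?ltW //; [case/andP: hr | apply: den_pos].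
      exact: le_trans hpa (cprob_G_false T hr he i).
    apply/setP => w'; rewrite /E BlS -/(E l.+1) IH inB !inE; apply/forallP => i.
    rewrite cprob_T //; apply: le_trans hpa _.
    by rewrite /a1 ler_pdivrMr ?mul1r ?lerDl ?subr_ge0 ?ltW //; [case/andP: hr | apply: den_pos].
  rewrite inE; apply/asboolP => -[|l] // _; by rewrite -/(E l.+1) hall inE.
move/negbT: hpa; rewrite -ltNge => hpa.
have [c0E hE] := Q hpa n.
have EnY : E n \subset allY n.
  apply/subsetP => w' /hE h; rewrite inE; apply/forallP => j; apply: h; exact: dep_le.
case: ifP => hpc.
  apply/asboolP/idP.
    move=> /(_ n n0); exact: (subsetP EnY).
  move=> wY; suff : forall l, allY n \subset E l.+1.
    by move=> h [|l] // _; exact: (subsetP (h l)).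
  elim => [|l IH]; apply/subsetP => w' w'Y; rewrite /E BlS inB; apply/forallP => i.
    have : w'.2 i by move: w'Y; rewrite inE => /forallP.
    move=> ->; apply: le_trans hpc (cprob_allT T hr he i n0 _); by rewrite inE.
  have : w'.2 i by move: w'Y; rewrite inE => /forallP.
  move=> ->; apply: le_trans hpc (cprob_allT T hr he i n0 _).
  by apply: (subsetP IH); rewrite inE; apply/forallP => k; rewrite ffunE.
move/negbT: hpc; rewrite -ltNge => hpc.
rewrite inE; apply/negbTE/negP => /asboolP /(_ n.+1 isT).
rewrite BlS -/(E n) inB => /forallP /(_ j0).
case: (w.2 j0).
  by move=> h; have := le_lt_trans h (le_lt_trans (cprob_allY_true hr he n0 hj0 EnY) hpc); rewrite ltxx.
rewrite cprob_allY_false // => h0.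
have : 0 < a1 rho eps by rewrite /a1 divr_gt0 ?den_pos // mulr_gt0; case/andP: hr; case/andP: he.
by move=> ha; have := lt_trans ha hpa; rewrite ltNge h0.
Qed.

Unset Implicit Arguments.

Theorem theorem1 (R : realFieldType) (n : nat) (rho eps : R) :
  (2 <= n)%N -> 0 < rho < 1 -> 0 < eps < 1 ->
  forall p : R, forall T1 T2 : infotree n,
    Cp rho eps T1 p (Gev n) = Cp rho eps T2 p (Gev n) /\
    prob rho eps T1 (Cp rho eps T1 p (Gev n)) = prob rho eps T2 (Cp rho eps T2 p (Gev n)).
Proof.
move=> n2 hr he p T1 T2.
have n0 : (0 < n)%N by apply: leq_trans n2.
rewrite !Cp_char //; split => //.
case: ifP => _; first by rewrite !probT.
case: ifP => _; first by rewrite !prob_allY.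
by rewrite !prob0.
Qed.
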